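(* For any constants $\alpha_1,\dots,\alpha_4$, any smooth $H=H(t,t^-,q,q^-,p,p^-)$ and any smooth $\xi,\eta,\nu$ of $(t,q,p)$, the identity $$\Omega\equiv \xi\frac{\delta\tilde H}{\delta t}+\eta\frac{\delta\tilde H}{\delta q}+\nu\frac{\delta\tilde H}{\delta p}+D(C)+(1-S_+)P$$ holds, where $$\Omega= \nu^{-}(\alpha_{1}\dot{q}+\alpha_{2}\dot{q}^{-})+p^{-}(\alpha_{1}D(\eta)+\alpha_{2}D(\eta^{-}))+\nu(\alpha_{3}\dot{q}+\alpha_{4}\dot{q}^{-})+p(\alpha_{3}D(\eta)+\alpha_{4}D(\eta^{-}))+(\alpha_{2}p^{-}+\alpha_{4}p)\dot{q}^{-}D(\xi-\xi^{-})-\xi H_t-\eta H_q-\nu H_p-\xi^{-}H_{t^-}-\eta^{-}H_{q^-}-\nu^{-}H_{p^-}-HD(\xi),$$ $$C=\eta(\alpha_{4}p^{+}+(\alpha_{2}+\alpha_{3})p+\alpha_{1}p^{-})-\xi\big(\alpha_{2}(p\dot{q}-p^{-}\dot{q}^{-})+\alpha_{4}(p^{+}\dot{q}-p\dot{q}^{-})+H\big),$$ $$P=(\alpha_{2}p^{-}+\alpha_{4}p)D(\eta^{-})+\nu^{-}(\alpha_{1}\dot{q}+\alpha_{2}\dot{q}^{-})-(\alpha_{2}p^{-}+\alpha_{4}p)\dot{q}^{-}D(\xi^{-})-\xi^{-}H_{t^-}-\eta^{-}H_{q^-}-\nu^{-}H_{p^-},$$ and $$\frac{\delta\tilde H}{\delta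 p}=\alpha_1\dot q^++(\alpha_2+\alpha_3)\dot q+\alpha_4\dot q^--\frac{\partial}{\partial p}(H+H^+),\qquad \frac{\delta\tilde H}{\delta q}=-\Big(\alpha_4\dot p^++(\alpha_2+\alpha_3)\dot p+\alpha_1\dot p^-+\frac{\partial}{\partial q}(H+H^+)\Big),$$ $$\frac{\delta\tilde H}{\delta t}=D\big[\alpha_2(p\dot q-p^-\dot q^-)+\alpha_4(p^+\dot q-p\dot q^-)\big]+D(H)-\frac{\partial}{\partial t}(H+H^+).$$
   Context: Fix a constant delay $\tau>0$; $t^\pm=t\pm\tau$, and for a function $f$ of $t$, $f^\pm=f(t\pm\tau)$. $S_+$ is the shift operator sending every variable to its value at the next point ($t^-\mapsto t$, $t\mapsto t^+$, $q^-\mapsto q$, $q\mapsto q^+$, similarly for $p$ and derivatives); $S_-$ is the backward shift; $\xi^\pm=S_\pm(\xi)$ etc. $H^+=S_+(H)=H(t^+,t,q^+,q,p^+,p)$. Subscripts on $H$ denote partial derivatives. $D$ is the total derivative acting on variables at the three points $t^-,t,t^+$: $D=\partial_t+\dot q\partial_q+\dot p\partial_p+\ddot q\partial_{\dot q}+\ddot p\partial_{\dot p}+\cdots$ plus analogous terms for the variables at $t^-$ and $t^+$. $\tilde H=p^{-}(\alpha_{1}\dot{q}+\alpha_{2}\dot{q}^{-})+p(\alpha_{3}\dot{q}+\alpha_{4}\dot{q}^{-})-H$. The quantity $\Omega$ equals $X(\tilde H)+\tilde H D(\xi)$ for the prolonged generator $X=\xi\partial_t+\eta\partial_q+\nu\partial_p+\dots$.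 *)

(* Defs.v *)
From HB Require Import structures.
From mathcomp Require Import all_boot all_order all_algebra.
From mathcomp Require Import all_classical all_reals all_analysis.
Set Implicit Arguments. Unset Strict Implicit. Unset Printing Implicit Defensive.
Import Order.TTheory GRing.Theory Num.Theory.
Import numFieldNormedType.Exports.
Local Open Scope ring_scope.

Fixpoint Ck {R : realType} {V : normedModType R} (n : nat) (f : V -> R) : Prop :=
  match n with
  | 0 => continuous f
  | n'.+1 => (forall x, differentiable f x) /\ forall v : V, Ck n' (fun x => 'D_v f x)
  end.
Definition smooth {R : realType} {V : normedModType R} (f : V -> R) : Prop :=
  forall n, Ck n f.

(* Points of R^6 = (t, t^-, q, q^-, p, p^-) and of R^3 = (t, q, p). *)
Definition R6 (R : realType) := (R * R * R * R * R * R)%type.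
Definition R3 (R : realType) := (R * R * R)%type.

Section DelayData.
Variable R : realType.
Variable tau a1 a2 a3 a4 : R.
Variables q p : R -> R.
Variable H : R6 R -> R.
Variables xi eta nu : R3 R -> R.

Definition D (f : R -> R) : R -> R := derive1 f.
Definition Sm (f : R -> R) : R -> R := fun t => f (t - tau).

Definition qd := D q.
Definition pd := D p.

Definition pt6 (t : R) : R6 R := (t, t - tau, q t, q (t - tau), p t, p (t - tau)).
Definition Hc (t : R) : R := H (pt6 t).

Definition e_t  : R6 R := (1, 0, 0, 0, 0, 0).
Definition e_tm : R6 R := (0, 1, 0, 0, 0, 0).
Definition e_q  : R6 R := (0, 0, 1, 0, 0, 0).
Definition e_qm : R6 R := (0, 0, 0, 1, 0, 0).
Definition e_p  : R6 R := (0, 0, 0, 0, 1, 0).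
Definition e_pm : R6 R := (0, 0, 0, 0, 0, 1).

Definition Ht  t := 'D_e_t  H (pt6 t).
Definition Htm t := 'D_e_tm H (pt6 t).
Definition Hq  t := 'D_e_q  H (pt6 t).
Definition Hqm t := 'D_e_qm H (pt6 t).
Definition Hp  t := 'D_e_p  H (pt6 t).
Definition Hpm t := 'D_e_pm H (pt6 t).

Definition xic  t := xi  (t, q t, p t).
Definition etac t := eta (t, q t, p t).
Definition nuc  t := nu  (t, q t, p t).

Definition Omega (t : R) : R :=
  nuc (t - tau) * (a1 * qd t + a2 * qd (t - tau))
  + p (t - tau) * (a1 * D etac t + a2 * D (Sm etac) t)
  + nuc t * (a3 * qd t + a4 * qd (t - tau))
  + p t * (a3 * D etac t + a4 * D (Sm etac) t)
  + (a2 * p (t - tau) + a4 * p t) * qd (t - tau) * D (fun s => xic s - Sm xic s) t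
  - xic t * Ht t - etac t * Hq t - nuc t * Hp t
  - xic (t - tau) * Htm t - etac (t - tau) * Hqm t - nuc (t - tau) * Hpm t
  - Hc t * D xic t.

Definition Cfl (t : R) : R :=
  etac t * (a4 * p (t + tau) + (a2 + a3) * p t + a1 * p (t - tau))
  - xic t * (a2 * (p t * qd t - p (t - tau) * qd (t - tau))
             + a4 * (p (t + tau) * qd t - p t * qd (t - tau)) + Hc t).

Definition Pfl (t : R) : R :=
  (a2 * p (t - tau) + a4 * p t) * D (Sm etac) t
  + nuc (t - tau) * (a1 * qd t + a2 * qd (t - tau))
  - (a2 * p (t - tau) + a4 * p t) * qd (t - tau) * D (Sm xic) t
  - xic (t - tau) * Htm t - etac (t - tau) * Hqm t - nuc (t - tau) * Hpm t.

Definition dHp (t : R) : R :=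
  a1 * qd (t + tau) + (a2 + a3) * qd t + a4 * qd (t - tau)
  - (Hp t + Hpm (t + tau)).
Definition dHq (t : R) : R :=
  - (a4 * pd (t + tau) + (a2 + a3) * pd t + a1 * pd (t - tau)
     + (Hq t + Hqm (t + tau))).
Definition dHt (t : R) : R :=
  D (fun s => a2 * (p s * qd s - p (s - tau) * qd (s - tau))
              + a4 * (p (s + tau) * qd s - p s * qd (s - tau))) t
  + D Hc t - (Ht t + Htm (t + tau)).

Definition Rhs (t : R) : R :=
  xic t * dHt t + etac t * dHq t + nuc t * dHp t + D Cfl t
  + (Pfl t - Pfl (t + tau)).

End DelayData.

(* Main.v *)
Require Import Defs.
From HB Require Import structures.
From mathcomp Require Import all_boot all_order all_algebra.
From mathcomp Require Import all_classical all_reals all_analysis.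
From mathcomp Require Import ring.
Import Order.TTheory GRing.Theory Num.Theory.
Import numFieldNormedType.Exports.
Local Open Scope ring_scope.

Section H.
Context {R : realType}.
Implicit Types f g : R -> R.
Definition Dv f := forall x, derivable f x 1.

Lemma DvD {f g} : Dv f -> Dv g -> Dv (fun s => f s + g s).
Proof. move=> df dg x; exact: (derivableD (df x) (dg x)). Qed.
Lemma DvB {f g} : Dv f -> Dv g -> Dv (fun s => f s - g s).
Proof. move=> df dg x; exact: (derivableB (df x) (dg x)). Qed.
Lemma DvM {f g} : Dv f -> Dv g -> Dv (fun s => f s * g s).
Proof. move=> df dg x; exact: (derivableM (df x) (dg x)). Qed.
Lemma DvC (c : R) : Dv (fun _ => c).
Proof. move=> x; exact: (derivable_cst c x 1). Qed.
Lemma DvId : Dv (fun s => s).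
Proof. move=> x; exact: derivable_id. Qed.
Lemma DvS {f} (c : R) : Dv f -> Dv (fun s => f (s + c)).
Proof.
move=> df x; apply/derivable1_diffP.
have -> : (fun s => f (s + c)) = f \o (fun s => s + c) by [].
apply: differentiable_comp; last exact/derivable1_diffP.
apply/derivable1_diffP. exact: (DvD DvId (DvC c) x).
Qed.

Lemma d1D f g t : Dv f -> Dv g -> D (fun s => f s + g s) t = D f t + D g t.
Proof. by move=> df dg; rewrite /D !derive1E (deriveD (df t) (dg t)). Qed.
Lemma d1B f g t : Dv f -> Dv g -> D (fun s => f s - g s) t = D f t - D g t.
Proof. by move=> df dg; rewrite /D !derive1E (deriveB (df t) (dg t)). Qed.
Lemma d1M f g t : Dv f -> Dv g -> D (fun s => f s * g s) t = f t * D g t + g t * D f t.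
Proof. by move=> df dg; rewrite /D !derive1E (deriveM (df t) (dg t)). Qed.
Lemma d1Z f (k : R) t : Dv f -> D (fun s => k * f s) t = k * D f t.
Proof. by move=> df; rewrite /D !derive1E (deriveZ k (df t)). Qed.
Lemma d1S f (c : R) t : D (fun s => f (s + c)) t = D f (t + c).
Proof.
rewrite /D /derive1; by under [in RHS]eq_fun do rewrite addrA.
Qed.
End H.

Section K.
Context {R : realType}.
Implicit Types f g : R -> R.

Lemma keyC (e x K A h : R -> R) t : Dv e -> Dv x -> Dv K -> Dv A -> Dv h ->
  D (fun s => e s * K s - x s * (A s + h s)) t =
  D e t * K t + e t * D K t - (D x t * (A t + h t) + x t * (D A t + D h t)).
Proof.
move=> de dx dK dA dh.
rewrite (d1B _ _ _ (DvM de dK) (DvM dx (DvD dA dh))).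
rewrite (d1M _ _ _ de dK) (d1M _ _ _ dx (DvD dA dh)) (d1D _ _ _ dA dh).
ring.
Qed.

Lemma keyK f (c1 c2 c3 tau : R) t : Dv f ->
  D (fun s => c1 * f (s + tau) + c2 * f s + c3 * f (s - tau)) t =
  c1 * D f (t + tau) + c2 * D f t + c3 * D f (t - tau).
Proof.
move=> df.
have d1 := DvM (DvC c1) (DvS tau df).
have d2 := DvM (DvC c2) df.
have d3 := DvM (DvC c3) (DvS (- tau) df).
rewrite (d1D _ _ _ (DvD d1 d2) d3) (d1D _ _ _ d1 d2).
rewrite (d1Z _ _ _ (DvS tau df)) (d1Z _ _ _ df) (d1Z _ _ _ (DvS (-tau) df)).
by rewrite (d1S f tau) (d1S f (-tau)).
Qed.
End K.
Section B.
Context {R : realType}.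
Implicit Types f g : R -> R.

Lemma smooth_Dv {f} : smooth f -> Dv f.
Proof. by move=> sf x; apply/derivable1_diffP; exact: ((sf 1%N).1 x). Qed.

Lemma smooth_Dvd {f} : smooth f -> Dv (D f).
Proof.
move=> sf x; apply/derivable1_diffP.
have -> : D f = (fun a => 'D_1 f a) by apply/funext => a; rewrite /D derive1E.
exact: (((sf 2%N).2 1).1 x).
Qed.

Lemma dfP {f} x : Dv f -> differentiable f x.
Proof. by move=> df; apply/derivable1_diffP. Qed.

Lemma Dv_comp3 (xi : R3 R -> R) f g : smooth xi -> Dv f -> Dv g ->
  Dv (fun t => xi (t, f t, g t)).
Proof.
move=> sx df dg x; apply/derivable1_diffP.
have -> : (fun t => xi (t, f t, g t)) = xi \o (fun t => (t, f t, g t)) by [].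
apply: differentiable_comp; last exact: ((sx 1%N).1).
apply: differentiable_pair; last exact: dfP.
apply: differentiable_pair; last exact: dfP.
by apply: dfP; exact: DvId.
Qed.

Lemma Dv_comp6 (H : R6 R -> R) f1 f2 f3 f4 f5 f6 : smooth H ->
  Dv f1 -> Dv f2 -> Dv f3 -> Dv f4 -> Dv f5 -> Dv f6 ->
  Dv (fun t => H (f1 t, f2 t, f3 t, f4 t, f5 t, f6 t)).
Proof.
move=> sH d1 d2 d3 d4 d5 d6 x; apply/derivable1_diffP.
have -> : (fun t => H (f1 t, f2 t, f3 t, f4 t, f5 t, f6 t))
   = H \o (fun t => (f1 t, f2 t, f3 t, f4 t, f5 t, f6 t)) by [].
apply: differentiable_comp; last exact: ((sH 1%N).1).
apply: differentiable_pair; last exact: dfP.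
apply: differentiable_pair; last exact: dfP.
apply: differentiable_pair; last exact: dfP.
apply: differentiable_pair; last exact: dfP.
apply: differentiable_pair; exact: dfP.
Qed.
End B.
Theorem lemma2 (R : realType) (tau a1 a2 a3 a4 : R) (q p : R -> R)
    (H : R6 R -> R) (xi eta_ nu : R3 R -> R) :
  0 < tau ->
  smooth q -> smooth p -> smooth H -> smooth xi -> smooth eta_ -> smooth nu ->
  forall t : R,
    Omega tau a1 a2 a3 a4 q p H xi eta_ nu t =
    Rhs tau a1 a2 a3 a4 q p H xi eta_ nu t.
Proof.
move=> _ sq sp sH sxi seta snu t.
have dq := smooth_Dv sq.
have dp := smooth_Dv sp.
have dqd : Dv (qd q) by exact: smooth_Dvd.
have de : Dv (etac q p eta_) by exact: Dv_comp3.
have dx : Dv (xic q p xi) by exact: Dv_comp3.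
have dH : Dv (Hc tau q p H).
  rewrite /Hc /pt6.
  apply: Dv_comp6. exact: sH.
  - exact: DvId.
  - exact: (DvD DvId (DvC (-tau))).
  - exact: dq.
  - exact: (DvS (-tau) dq).
  - exact: dp.
  - exact: (DvS (-tau) dp).
have ES : forall f s, D (Sm tau f) s = D f (s - tau) by move=> f s; exact: d1S.

pose K := fun s => a4 * p (s + tau) + (a2 + a3) * p s + a1 * p (s - tau).
pose A := fun s => a2 * (p s * qd q s - p (s - tau) * qd q (s - tau))
              + a4 * (p (s + tau) * qd q s - p s * qd q (s - tau)).
have dK : Dv K :=
  DvD (DvD (DvM (DvC a4) (DvS tau dp)) (DvM (DvC (a2+a3)) dp)) (DvM (DvC a1) (DvS (-tau) dp)).
have dA : Dv A :=
  DvD (DvM (DvC a2) (DvB (DvM dp dqd) (DvM (DvS (-tau) dp) (DvS (-tau) dqd))))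
      (DvM (DvC a4) (DvB (DvM (DvS tau dp) dqd) (DvM dp (DvS (-tau) dqd)))).
have hK : D K t = a4 * D p (t + tau) + (a2 + a3) * D p t + a1 * D p (t - tau) :=
  keyK _ _ _ _ _ t dp.
have hC : D (Cfl tau a1 a2 a3 a4 q p H xi eta_) t =
  D (etac q p eta_) t * K t
  + etac q p eta_ t * (a4 * D p (t + tau) + (a2 + a3) * D p t + a1 * D p (t - tau))
  - (D (xic q p xi) t * (A t + Hc tau q p H t)
     + xic q p xi t * (D A t + D (Hc tau q p H) t)).
  rewrite -hK. exact: (keyC _ _ _ _ _ t de dx dK dA dH).
rewrite /Omega /Rhs /dHt /dHq /dHp /Pfl hC /pd.
rewrite (d1B _ _ _ dx (DvS (-tau) dx)).
rewrite !ES !addrK /K /A /=.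
ring.
Qed.
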